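(* There is a constant $c$ such that for every $n\in\mathbb N$ and every $n$-ary Boolean function $f:\mathbb B^n\to\mathbb B$ there exists an instruction sequence $X\in\mathrm{IS}^{na}_{br}$ such that the only jump instruction occurring in $X$ is $\#2$, $X$ computes $f$, and $|X|\le c\cdot (n+1)\cdot 2^n$ (i.e. $|X|=O(n\cdot 2^n)$).
   Context: $\mathbb B=\{T,F\}$. A primitive instruction is one of: a plain basic instruction $a$, a positive test instruction $+a$, a negative test instruction $-a$ (for a basic instruction $a$), a forward jump instruction $\#l$ ($l\in\mathbb N$), or the termination instruction $!$. An instruction sequence is a finite nonempty sequence $X=u_1;\dots;u_k$ of primitive instructions; its length is $|X|=k$. Basic instructions have the form $f.m$ where the focus $f$ is one of $\mathrm{in}{:}i$, $\mathrm{aux}{:}i$ ($i\ge 1$) or $\mathrm{out}$, each naming a Boolean register, and the method $m$ is one of $\mathrm{set}{:}T$, $\mathrm{set}{:}F$, $\mathrm{get}$. Executing $f.\mathrm{set}{:}b$ sets register $f$ to $b$ and yields reply $b$; executing $f.\mathrm{get}$ leaves the register unchanged and yields its content as reply. Execution of $X=u_1;\dots;u_k$: a counter starts at $1$. If the counter exceeds $k$, execution deadlocks. At position $i$: if $u_i=!$, execution terminates; if $u_i=\#l$, execution deadlocks if $l=0$ and otherwise the counter becomes $i+l$; if $u_i$ is $a$, $+a$ or $-a$, the basic instruction $a$ is executed yielding reply $r$, and the counter becomes $i+1$ for $u_i=a$; for $u_i=+a$ it becomes $i+1$ if $r=T$ and $i+2$ if $r=F$; for $u_i=-a$ it becomes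 $i+1$ if $r=F$ and $i+2$ if $r=T$. $\mathrm{IS}_{br}$ is the set of instruction sequences in which every basic instruction occurring (in a plain, positive test or negative test instruction) belongs to $\{f.\mathrm{get}: f=\mathrm{in}{:}i \text{ or } f=\mathrm{aux}{:}i\}\cup\{f.\mathrm{set}{:}b: f=\mathrm{aux}{:}i \text{ or } f=\mathrm{out},\ b\in\mathbb B\}$. $\mathrm{IS}^{na}_{br}\subseteq \mathrm{IS}_{br}$ is the set of those in which every basic instruction belongs to $\{\mathrm{in}{:}i.\mathrm{get}: i\ge1\}\cup\{\mathrm{out}.\mathrm{set}{:}T,\mathrm{out}.\mathrm{set}{:}F\}$. $X\in\mathrm{IS}_{br}$ computes $f:\mathbb B^n\to\mathbb B$ if for every $(b_1,\dots,b_n)\in\mathbb B^n$: when $X$ is executed with register $\mathrm{in}{:}j$ initialised to $b_j$ ($j\le n$) and all registers $\mathrm{aux}{:}i$ and $\mathrm{out}$ initialised to $F$, execution terminates (does not deadlock) without ever executing a basic instruction with focus $\mathrm{in}{:}j$ for $j>n$, and at termination register $\mathrm{out}$ contains $f(b_1,\dots,b_n)$. *)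

(* Defs.v *)
From mathcomp Require Import all_boot.
Set Implicit Arguments. Unset Strict Implicit. Unset Printing Implicit Defensive.

(* Foci: in:i, aux:i (i >= 1 required by the IS_br predicates), out *)
Inductive focus := FIn of nat | FAux of nat | FOut.
Inductive method := MSet of bool | MGet.
Definition basic := (focus * method)%type.

(* Primitive instructions: a, +a, -a, #l, ! *)
Inductive prim :=
| Plain of basic | PosT of basic | NegT of basic | Jump of nat | Term.

Definition instr_seq := seq prim.

Definition prim_basic (u : prim) : option basic :=
  match u with Plain a | PosT a | NegT a => Some a | _ => None end.

Definition basic_br (a : basic) : bool :=
  match a with
  | (FIn i, MGet) => 0 < i
  | (FAux i, MGet) => 0 < i
  | (FAux i, MSet _) => 0 < i
  | (FOut, MSet _) => true
  | _ => false
  end.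

Definition basic_na (a : basic) : bool :=
  match a with
  | (FIn i, MGet) => 0 < i
  | (FOut, MSet _) => true
  | _ => false
  end.

Definition prim_ok (P : basic -> bool) (u : prim) : bool :=
  if prim_basic u is Some a then P a else true.

Definition IS_br (X : instr_seq) : bool := (0 < size X) && all (prim_ok basic_br) X.
Definition IS_na_br (X : instr_seq) : bool := (0 < size X) && all (prim_ok basic_na) X.

Definition state := focus -> bool.

Definition focus_eqb (f g : focus) : bool :=
  match f, g with
  | FIn i, FIn j => i == j
  | FAux i, FAux j => i == j
  | FOut, FOut => true
  | _, _ => false
  end.

Definition upd (s : state) (f : focus) (b : bool) : state :=
  fun g => if focus_eqb g f then b else s g.

Definition exec_basic (a : basic) (s : state) : bool * state :=
  match a with
  | (f, MSet b) => (b, upd s f b)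
  | (f, MGet) => (s f, s)
  end.

(* Instruction at (1-based) position i, None if out of range (deadlock). *)
Definition instr_at (X : instr_seq) (i : nat) : option prim :=
  if (0 < i) && (i <= size X) then Some (nth Term X i.-1) else None.

Definition focus_ok (n : nat) (a : basic) : bool :=
  match a.1 with FIn j => j <= n | _ => true end.

Inductive Terminates (n : nat) (X : instr_seq) : nat -> state -> state -> Prop :=
| T_term i s : instr_at X i = Some Term -> Terminates n X i s s
| T_jump i l s s' : instr_at X i = Some (Jump l) -> 0 < l ->
    Terminates n X (i + l) s s' -> Terminates n X i s s'
| T_plain i a s s' : instr_at X i = Some (Plain a) -> focus_ok n a ->
    Terminates n X i.+1 (exec_basic a s).2 s' -> Terminates n X i s s'
| T_pos i a s s' : instr_at X i = Some (PosT a) -> focus_ok n a ->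
    Terminates n X (if (exec_basic a s).1 then i.+1 else i.+2) (exec_basic a s).2 s' ->
    Terminates n X i s s'
| T_neg i a s s' : instr_at X i = Some (NegT a) -> focus_ok n a ->
    Terminates n X (if (exec_basic a s).1 then i.+2 else i.+1) (exec_basic a s).2 s' ->
    Terminates n X i s s'.

(* Initial state: in:j = b_j for 1 <= j <= n, aux:i and out = F.
   (in:j for j > n is set to F, but is never allowed to be accessed.) *)
Definition init_state (n : nat) (b : n.-tuple bool) : state :=
  fun f => match f with FIn j => (0 < j) && nth false b j.-1 | _ => false end.

Definition computes (n : nat) (X : instr_seq) (f : n.-tuple bool -> bool) : Prop :=
  forall b : n.-tuple bool,
    exists s', Terminates n X 1 (init_state b) s' /\ s' FOut = f b.

Definition only_jump2 (X : instr_seq) : bool :=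
  all (fun u => match u with Jump l => l == 2 | _ => true end) X.

(* Main.v *)
From Stdlib Require Import Lia.
Require Import Defs.
From mathcomp Require Import all_boot.
Set Implicit Arguments. Unset Strict Implicit.

Ltac arith := repeat match goal with H : is_true (_ <= _) |- _ => move/leP: H => H end;
  try apply/leP; rewrite <- ?addnn in *; rewrite <- ?plusE in *; rewrite <- ?multE in *; lia.

Definition test (j : nat) (x : bool) : prim :=
  if x then NegT (FIn j, MGet) else PosT (FIn j, MGet).

Fixpoint tests_from (j : nat) (w : seq bool) : seq prim :=
  match w with
  | [::] => [::]
  | x :: w' => test j x :: Jump 2 :: tests_from j.+1 w'
  end.

Definition outi (b : bool) : prim :=
  if b then NegT (FOut, MSet true) else PosT (FOut, MSet false).

Definition blk n (f : n.-tuple bool -> bool) (v : n.-tuple bool) : seq prim :=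
  tests_from 1 v ++ [:: outi (f v); Jump 2; Term].

Lemma size_tests j w : size (tests_from j w) = (size w).*2.
Proof. by elim: w j => [|x w IH] j //=; rewrite IH doubleS. Qed.

Lemma instr_at_mid P u R i : i = size P + 1 -> instr_at (P ++ u :: R) i = Some u.
Proof.
move=> ->; rewrite /instr_at size_cat /= addn1 ltn0Sn /= addnS ltnS leq_addr /=.
by rewrite nth_cat ltnn subnn.
Qed.

Lemma step_test n X i j x s s' : instr_at X i = Some (test j x) -> j <= n ->
  Terminates n X (if s (FIn j) == x then i.+2 else i.+1) s s' -> Terminates n X i s s'.
Proof.
rewrite /test => Hi Hj; case: x Hi => Hi; case e: (s (FIn j)) => /= H.
- by apply: (T_neg Hi) => //=; rewrite e.
- by apply: (T_neg Hi) => //=; rewrite e.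
- by apply: (T_pos Hi) => //=; rewrite e.
- by apply: (T_pos Hi) => //=; rewrite e.
Qed.

Lemma lane n X P o Q s s' w j :
  X = P ++ tests_from j w ++ o :: Jump 2 :: Term :: Q ->
  Terminates n X (size P + (size w).*2 + 4) s s' -> Terminates n X (size P + 2) s s'.
Proof.
elim: w P j => [|x w IH] P j HX H /=.
- apply: (T_jump (l := 2)) => //.
    rewrite HX /= -cat1s catA; apply: instr_at_mid; rewrite size_cat /=; arith.
  move: H => /=; have -> : size P + 2 + 2 = size P + 0.*2 + 4 by arith.
  done.
- apply: (T_jump (l := 2)) => //.
    rewrite HX /= -(cat1s (test j x)) catA; apply: instr_at_mid; rewrite size_cat /=; arith.
  have HX' : X = (P ++ [:: test j x; Jump 2]) ++ tests_from j.+1 w ++ o :: Jump 2 :: Term :: Q.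
    by rewrite HX -catA.
  have := IH _ _ HX'; rewrite size_cat /=.
  move=> IH'; apply: IH'.
  move: H => /=; have -> : size P + (size w).+1.*2 + 4 = size P + 2 + (size w).*2 + 4 by rewrite doubleS; arith.
  done.
Qed.

Lemma mism n X P o Q s s' w j :
  X = P ++ tests_from j w ++ o :: Jump 2 :: Term :: Q -> j + size w <= n.+1 ->
  (exists2 k, k < size w & s (FIn (j + k)) != nth false w k) ->
  Terminates n X (size P + (size w).*2 + 4) s s' -> Terminates n X (size P + 1) s s'.
Proof.
elim: w P j => [|x w IH] P j HX Hn [k Hk Hne] H //=.
have Hi : instr_at X (size P + 1) = Some (test j x).
  by rewrite HX /=; apply: instr_at_mid.
apply: (step_test Hi); first by move: Hn => /= Hn; arith.
case: eqP => Hjx.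
- have HX' : X = (P ++ [:: test j x; Jump 2]) ++ tests_from j.+1 w ++ o :: Jump 2 :: Term :: Q.
    by rewrite HX -catA.
  have -> : (size P + 1).+2 = size (P ++ [:: test j x; Jump 2]) + 1 by rewrite size_cat /=; arith.
  apply: (IH _ j.+1 HX').
  + by move: Hn => /= Hn; arith.
  + case: k Hk Hne => [|k] Hk Hne; first by move: Hne; rewrite addn0 Hjx eqxx.
    by exists k => //; rewrite addSnnS.
  + move: H => /=; rewrite size_cat /= doubleS.
    have -> : size P + (size w).*2.+2 + 4 = size P + 2 + (size w).*2 + 4 by arith.
    done.
- have -> : (size P + 1).+1 = size P + 2 by arith.
  apply: (lane (w := x :: w) (j := j) HX); done.
Qed.

Lemma matchl n X P o Q s s' w j :
  X = P ++ tests_from j w ++ o :: Jump 2 :: Term :: Q -> j + size w <= n.+1 ->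
  (forall k, k < size w -> s (FIn (j + k)) = nth false w k) ->
  Terminates n X (size P + (size w).*2 + 1) s s' -> Terminates n X (size P + 1) s s'.
Proof.
elim: w P j => [|x w IH] P j HX Hn Heq H /=.
  by move: H; rewrite /= addn0.
have Hi : instr_at X (size P + 1) = Some (test j x).
  by rewrite HX /=; apply: instr_at_mid.
apply: (step_test Hi); first by move: Hn => /= Hn; arith.
have := Heq 0 (ltn0Sn _); rewrite addn0 => ->; rewrite eqxx.
have HX' : X = (P ++ [:: test j x; Jump 2]) ++ tests_from j.+1 w ++ o :: Jump 2 :: Term :: Q.
  by rewrite HX -catA.
have -> : (size P + 1).+2 = size (P ++ [:: test j x; Jump 2]) + 1 by rewrite size_cat /=; arith.
apply: (IH _ j.+1 HX').
- by move: Hn => /= Hn; arith.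
- by move=> k Hk; rewrite addSnnS; apply: (Heq k.+1).
- move: H => /=; rewrite size_cat /= doubleS.
  have -> : size P + (size w).*2.+2 + 1 = size P + 2 + (size w).*2 + 1 by arith.
  done.
Qed.

Lemma run n (f : n.-tuple bool -> bool) (b : n.-tuple bool) vs P Q X :
  X = P ++ flatten (map (blk f) vs) ++ Q -> b \in vs ->
  Terminates n X (size P + 1) (init_state b) (upd (init_state b) FOut (f b)).
Proof.
elim: vs P => [|v vs IH] P HX //=.
rewrite in_cons; case: (eqVneq b v) => [Ebv _ | Hbv /= Hin]; first subst v.
- have HX' : X = P ++ tests_from 1 b ++ outi (f b) :: Jump 2 :: Term ::
      (flatten (map (blk f) vs) ++ Q) by rewrite HX /= /blk -!catA.
  apply: (matchl HX').
  + by rewrite size_tuple add1n.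
  + by move=> k Hk; rewrite add1n.
  + have Hi : instr_at X (size P + (size b).*2 + 1) = Some (outi (f b)).
      by rewrite HX' catA; apply: instr_at_mid; rewrite size_cat size_tests.
    have Ht : instr_at X (size P + (size b).*2 + 1).+2 = Some Term.
      rewrite HX' catA -(cat1s (outi _)) -(cat1s (Jump 2)) !catA.
      by apply: instr_at_mid; rewrite !size_cat size_tests /=; arith.
    rewrite /outi in Hi; case e: (f b) Hi => Hi.
    * by apply: (T_neg Hi) => //=; apply: T_term.
    * by apply: (T_pos Hi) => //=; apply: T_term.
- have HX' : X = P ++ tests_from 1 v ++ outi (f v) :: Jump 2 :: Term ::
      (flatten (map (blk f) vs) ++ Q) by rewrite HX /= /blk -!catA.
  apply: (mism HX').
  + by rewrite size_tuple add1n.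
  + case: (boolP (has (fun k => nth false v k != nth false b k) (iota 0 n))).
      move=> /hasP [k]; rewrite mem_iota add0n => Hk Hne.
      by exists k; rewrite ?size_tuple // add1n /= eq_sym.
    move=> /hasPn Hall; exfalso; move: Hbv; rewrite eq_sym => /eqP; apply.
    apply: val_inj; apply: (eq_from_nth (x0 := false)); first by rewrite !size_tuple.
    move=> k; rewrite size_tuple => Hk; apply/eqP.
    have := Hall k; rewrite mem_iota add0n Hk => /(_ isT); by rewrite negbK.
  + have HX2 : X = (P ++ blk f v) ++ flatten (map (blk f) vs) ++ Q by rewrite HX /= -!catA.
    have := IH _ HX2 Hin; rewrite size_cat /blk size_cat size_tests /=.
    by have -> : size P + ((size v).*2 + 3) + 1 = size P + (size v).*2 + 4 by arith.
Qed.

Lemma tests_ok j w : 0 < j -> all (prim_ok basic_na) (tests_from j w) && only_jump2 (tests_from j w).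
Proof.
elim: w j => [|x w IH] j Hj //=.
have /andP [H1 H2] := IH j.+1 isT.
rewrite /only_jump2 /= in H2 *; rewrite H1 H2 /test /prim_ok; by case: x => /=; rewrite Hj.
Qed.

Lemma blocks_ok n (f : n.-tuple bool -> bool) vs :
  all (prim_ok basic_na) (flatten (map (blk f) vs)) && only_jump2 (flatten (map (blk f) vs)).
Proof.
elim: vs => [|v vs IH] //=; rewrite /only_jump2 all_cat all_cat.
have /andP [H1 H2] := tests_ok v (ltn0Sn 0).
move: IH => /andP [H3 H4]; rewrite /only_jump2 in H2 H4.
rewrite /blk !all_cat H1 H2 H3 H4 /= /outi; by case: (f v).
Qed.

Lemma size_blocks n (f : n.-tuple bool -> bool) vs :
  size (flatten (map (blk f) vs)) = size vs * (n.*2 + 3).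
Proof.
elim: vs => [|v vs IH] //=; rewrite size_cat IH /blk size_cat size_tests size_tuple /=.
by rewrite mulSn.
Qed.

Theorem theorem1 :
  exists c : nat, forall (n : nat) (f : n.-tuple bool -> bool),
    exists X : instr_seq,
      IS_na_br X /\ only_jump2 X /\ computes X f /\ size X <= c * n.+1 * 2 ^ n.
Proof.
exists 5 => n f.
exists (flatten (map (blk f) (enum {: n.-tuple bool})) ++ [:: Term]).
have /andP [H1 H2] := blocks_ok f (enum {: n.-tuple bool}).
split; last split; last split.
- by rewrite /IS_na_br size_cat addn1 /= all_cat H1.
- by move: H2; rewrite /only_jump2 all_cat => ->.
- move=> b; exists (upd (init_state b) FOut (f b)); split; last by [].
  have := @run n f b (enum {: n.-tuple bool}) [::] [:: Term] _ erefl.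
  by rewrite mem_enum; apply.
- rewrite size_cat size_blocks -cardE card_tuple card_bool /=.
  have : 0 < 2 ^ n by rewrite expn_gt0.
  move: (2 ^ n) => e He; rewrite -addnn; move/leP: He => He.
  apply/leP; rewrite -!plusE -!multE; nia.
Qed.
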